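(* Let $K$ be a field, $R=K[x_1,\dots,x_n]$, $\boldsymbol{\lambda}=(\lambda_1,\dots,\lambda_n)$ a vector of positive integers, $L=\mathrm{lcm}(\lambda_1,\dots,\lambda_n)$, $\omega_i=L/\lambda_i$, $\boldsymbol{\omega}=(\omega_1,\dots,\omega_n)$, and $\Gamma=\{\boldsymbol{\alpha}\in\mathbb{N}^n\mid \boldsymbol{\omega}\cdot\boldsymbol{\alpha}\ge L\}$. The following are equivalent: (a) $I(\boldsymbol{\lambda})$ is normal; (b) whenever $\boldsymbol{\alpha}\in\mathbb{N}^n$ and $p$ is a positive integer with $\boldsymbol{\omega}\cdot\boldsymbol{\alpha}\ge pL$, there exist $\boldsymbol{\beta}_1,\dots,\boldsymbol{\beta}_p\in\Gamma$ with $\boldsymbol{\alpha}=\sum_{j=1}^p\boldsymbol{\beta}_j$; (c) whenever $\boldsymbol{\alpha}=(a_1,\dots,a_n)\in\mathbb{N}^n$ with $a_i<\lambda_i$ for all $i$ and $p$ is an integer with $1\le p<n$ and $\boldsymbol{\omega}\cdot\boldsymbol{\alpha}\ge pL$, there exist $\boldsymbol{\beta}_1,\dots,\boldsymbol{\beta}_p\in\Gamma$ with $\boldsymbol{\alpha}=\sum_{j=1}^p\boldsymbol{\beta}_j$.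
   Context: $J(\boldsymbol{\lambda})=(x_1^{\lambda_1},\dots,x_n^{\lambda_n})$ and $I(\boldsymbol{\lambda})=\overline{J(\boldsymbol{\lambda})}$ is its integral closure in $R$; the set $\Gamma$ is exactly the set of exponent vectors of monomials in $I(\boldsymbol{\lambda})$. An ideal is normal if all its positive powers are integrally closed. *)

(* Defs.v *)
From HB Require Import structures.
From mathcomp Require Import all_boot all_order all_algebra.
From mathcomp Require Import mpoly.
Set Implicit Arguments. Unset Strict Implicit. Unset Printing Implicit Defensive.
Import GRing.Theory.
Local Open Scope ring_scope.

Section Ideals.
Variable R : comNzRingType.

Definition ideal_gen (S : R -> Prop) (f : R) : Prop :=
  exists (m : nat) (c s : 'I_m -> R),
    (forall j, S (s j)) /\ f = \sum_(j < m) c j * s j.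

Definition ideal_mul (I J : R -> Prop) : R -> Prop :=
  ideal_gen (fun h => exists a b, [/\ I a, J b & h = a * b]).

Fixpoint ideal_pow (I : R -> Prop) (k : nat) : R -> Prop :=
  match k with
  | 0 => fun _ => True
  | k'.+1 => ideal_mul (ideal_pow I k') I
  end.

Definition integral_over_ideal (I : R -> Prop) (f : R) : Prop :=
  exists (m : nat) (a : nat -> R),
    [/\ (0 < m)%N,
        (forall i, (1 <= i <= m)%N -> ideal_pow I i (a i)) &
        f ^+ m + \sum_(1 <= i < m.+1) a i * f ^+ (m - i) = 0].

Definition int_closure (I : R -> Prop) : R -> Prop := integral_over_ideal I.

Definition integrally_closed (I : R -> Prop) : Prop :=
  forall f, int_closure I f -> I f.

Definition normal_ideal (I : R -> Prop) : Prop :=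
  forall k, (0 < k)%N -> integrally_closed (ideal_pow I k).

End Ideals.

Definition Jlam (K : fieldType) (n : nat) (lam : 'I_n -> nat) : {mpoly K[n]} -> Prop :=
  ideal_gen (fun f : {mpoly K[n]} => exists i : 'I_n, f = 'X_i ^+ lam i).

Definition Ilam (K : fieldType) (n : nat) (lam : 'I_n -> nat) : {mpoly K[n]} -> Prop :=
  int_closure (@Jlam K n lam).

Definition lcm_lam (n : nat) (lam : 'I_n -> nat) : nat := \big[lcmn/1%N]_(i < n) lam i.
Definition omega (n : nat) (lam : 'I_n -> nat) (i : 'I_n) : nat := (lcm_lam lam %/ lam i)%N.
Definition wdot (n : nat) (lam : 'I_n -> nat) (alpha : 'I_n -> nat) : nat :=
  (\sum_(i < n) omega lam i * alpha i)%N.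
Definition Gamma (n : nat) (lam : 'I_n -> nat) (alpha : 'I_n -> nat) : Prop :=
  (lcm_lam lam <= wdot lam alpha)%N.
Definition decomposable (n : nat) (lam : 'I_n -> nat) (alpha : 'I_n -> nat) (p : nat) : Prop :=
  exists beta : 'I_p -> 'I_n -> nat,
    (forall j, Gamma lam (beta j)) /\ (forall i, alpha i = \sum_(j < p) beta j i)%N.

(* Main.v *)
Require Import Defs.
From HB Require Import structures.
From mathcomp Require Import all_boot all_order all_algebra.
From mathcomp Require Import mpoly.
From mathcomp Require Import ring zify.
Set Implicit Arguments. Unset Strict Implicit. Unset Printing Implicit Defensive.
Import GRing.Theory.
Local Open Scope ring_scope.

Section IdealFacts.
Variable R : comNzRingType.
Implicit Types (I S : R -> Prop).

Lemma gen1 S r s : S s -> ideal_gen S (r * s).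
Proof.
move=> Ss; exists 1%N, (fun _ => r), (fun _ => s); split => //.
by rewrite big_ord1.
Qed.

Lemma gen0 S : ideal_gen S 0.
Proof. by exists 0%N, (fun _ => 0), (fun _ => 0); split => [[]//|]; rewrite big_ord0. Qed.

Lemma pow0 I k : (0 < k)%N -> ideal_pow I k 0.
Proof. by case: k => // k _; apply: gen0. Qed.

Lemma pow_seq I k (s : seq R) r :
  (forall x, x \in s -> I x) -> (k <= size s)%N ->
  ideal_pow I k (r * \prod_(x <- s) x).
Proof.
elim: k s r => [//|k IH] [//|x s] r Hs /= Hk.
rewrite big_cons.
have -> : r * (x * \prod_(y <- s) y) = 1 * ((r * \prod_(y <- s) y) * x).
  by ring.
rewrite /= /ideal_mul; apply: gen1; exists (r * \prod_(y <- s) y), x; split => //.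
- by apply: IH => // y ys; apply: Hs; rewrite in_cons ys orbT.
- by apply: Hs; rewrite in_cons eqxx.
Qed.

Lemma pow_seq_gen I k (s : seq R) :
  (forall x, x \in s -> I x) -> (k < size s)%N ->
  exists a b, [/\ ideal_pow I k a, I b & \prod_(x <- s) x = a * b].
Proof.
case: s => [//|x s] Hs /= Hk.
exists (1 * \prod_(y <- s) y), x; split.
- by apply: pow_seq => // y ys; apply: Hs; rewrite in_cons ys orbT.
- by apply: Hs; rewrite in_cons eqxx.
- by rewrite big_cons mul1r mulrC.
Qed.

Lemma pow_seq2 I k j (s : seq R) r :
  (forall x, x \in s -> I x) -> (k * j <= size s)%N ->
  ideal_pow (ideal_pow I k) j (r * \prod_(x <- s) x).
Proof.
elim: j s r => [//|j IH] s r Hs Hk /=.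
rewrite -(cat_take_drop k s) big_cat /=.
have -> : r * ((\prod_(x <- take k s) x) * \prod_(x <- drop k s) x)
   = 1 * ((r * \prod_(x <- drop k s) x) * (1 * \prod_(x <- take k s) x)).
  by ring.
rewrite /ideal_mul; apply: gen1; eexists; eexists; split; last reflexivity.
- apply: IH => [y /mem_drop ys|]; first exact: Hs.
  rewrite size_drop; move: Hk; rewrite mulnS; lia.
- apply: pow_seq => [y /mem_take ys|]; first exact: Hs.
  rewrite size_take; move: Hk; rewrite mulnS; case: ifP; lia.
Qed.

Lemma integral_of_pow I f m :
  (0 < m)%N -> ideal_pow I m (- 1 * f ^+ m) -> int_closure I f.
Proof.
move=> m0 Hm; exists m, (fun i => if i == m then - 1 * f ^+ m else 0); split => //.
- move=> i /andP[i1 im]; case: eqP => [-> //|_]; exact: pow0.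
- rewrite big_nat_recr //= eqxx subnn expr0 mulr1 big1_seq ?add0r.
    by rewrite mulN1r subrr.
  move=> i /andP[_]; rewrite mem_index_iota => /andP[_ im].
  by rewrite (ltn_eqF im) mul0r.
Qed.

Lemma mul_mono I1 I2 J1 J2 : (forall x, I1 x -> I2 x) -> (forall x, J1 x -> J2 x) ->
  forall x, ideal_mul I1 J1 x -> ideal_mul I2 J2 x.
Proof.
move=> HI HJ x [m [c [s [Hs ->]]]]; exists m, c, s; split => // j.
by have [a [b [Ha Hb E]]] := Hs j; exists a, b; split; auto.
Qed.

Lemma pow_mono I J k : (forall x, I x -> J x) -> forall x, ideal_pow I k x -> ideal_pow J k x.
Proof.
move=> HIJ; elim: k => [//|k IH] x /=; exact: mul_mono.
Qed.

End IdealFacts.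

Section Low.
Variable R : idomainType.
Implicit Types p q : {poly R}.
Definition low p c := forall j, (j < c)%N -> p`_j = 0.

Lemma lowE p c : low p c -> p = 'X^c * \poly_(i < size p) p`_(i + c).
Proof.
move=> H; apply/polyP => j; rewrite coefXnM; case: ltnP => [jc|cj]; first exact: H.
rewrite coef_poly subnK //; case: ltnP => // Hs.
by rewrite nth_default // (leq_trans Hs (leq_subr _ _)).
Qed.

Lemma lowE' p c : low p c -> exists P, p = 'X^c * P.
Proof. by move=> /lowE ->; eexists. Qed.

Lemma lowM p q a b : low p a -> low q b ->
  low (p * q) (a + b) /\ (p * q)`_(a + b) = p`_a * q`_b.
Proof.
move=> /lowE' [P ->] /lowE' [Q ->].
have -> : 'X^a * P * ('X^b * Q) = 'X^(a + b) * (P * Q) by rewrite exprD; ring.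
split; first by move=> j jab; rewrite coefXnM jab.
by rewrite !coefXnM !ltnn !subnn coef0M.
Qed.

Lemma lowX p d m : low p d -> low (p ^+ m) (m * d) /\ (p ^+ m)`_(m * d) = p`_d ^+ m.
Proof.
move=> Hp; elim: m => [|m [IH1 IH2]].
  by split => [j //|]; rewrite !expr0 mul0n coef1.
have [H1 H2] := lowM IH1 Hp.
by rewrite exprS mulrC mulSn addnC; split => //; rewrite H2 IH2 exprS mulrC.
Qed.

Lemma low_le p a b : low p a -> (b <= a)%N -> low p b.
Proof. by move=> H ba j jb; apply: H; apply: leq_trans ba. Qed.

Lemma low0 c : low 0 c. Proof. by move=> j _; rewrite coef0. Qed.
Lemma low_any p : low p 0. Proof. by []. Qed.
Lemma lowD p q c : low p c -> low q c -> low (p + q) c.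
Proof. by move=> Hp Hq j jc; rewrite coefD Hp ?Hq ?addr0. Qed.
Lemma lowMl p q c : low q c -> low (p * q) c.
Proof. by move=> Hq; have [] := lowM (low_any p) Hq. Qed.
Lemma low_sum m (F : 'I_m -> {poly R}) c : (forall j, low (F j) c) -> low (\sum_(j < m) F j) c.
Proof.
move=> H; elim/big_ind: _ => //; [exact: low0 | move=> ? ?; exact: lowD].
Qed.
End Low.

Section Main.
Variable K : fieldType.
Variable n : nat.
Variable lam : 'I_n -> nat.
Hypothesis lam_pos : forall i, (0 < lam i)%N.

Local Notation R := {mpoly K[n]}.
Local Notation L := (lcm_lam lam).
Local Notation om := (omega lam).

Lemma L_gt0 : (0 < L)%N.
Proof. rewrite /lcm_lam; elim/big_ind: _ => // x y; rewrite lcmn_gt0 => -> ->. by []. Qed.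

Lemma lam_dvd i : (lam i %| L)%N.
Proof. by move: (dvdnn L); rewrite {2}/lcm_lam => /dvdn_biglcmP; apply. Qed.

Lemma omK i : (om i * lam i = L)%N.
Proof. by rewrite /omega divnK // lam_dvd. Qed.

Lemma om_gt0 i : (0 < om i)%N.
Proof. by rewrite /omega divn_gt0 // dvdn_leq // ?L_gt0 ?lam_dvd. Qed.

Definition hh (i : 'I_n) : {poly R} := ('X_i)%:P * 'X^(om i).
Definition ff : K -> {poly R} := (polyC \o mpolyC n (R:=K)).
Definition phi : {rmorphism R -> {poly R}} := mmap ff hh.
Definition Dc c (g : R) := low (phi g) c.
Definition wt (m : 'X_{1..n}) := wdot lam (fun i => m i).

Lemma phiXi i : phi 'X_i = hh i.
Proof. by rewrite /phi /= mmapX mmap1U. Qed.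

Lemma phi_gen i : phi ('X_i ^+ lam i) = ('X_i ^+ lam i)%:P * 'X^L.
Proof.
by rewrite rmorphXn phiXi /hh exprMn rmorphXn -exprM (omK i).
Qed.

Lemma Dc_gen i : Dc L ('X_i ^+ lam i).
Proof. by rewrite /Dc phi_gen => j jL; rewrite coefMXn jL. Qed.

Lemma gen_D c (S : R -> Prop) g : (forall s, S s -> Dc c s) -> ideal_gen S g -> Dc c g.
Proof.
move=> HS [m [cc [s [Hs ->]]]]; rewrite /Dc rmorph_sum; apply: low_sum => j.
by rewrite rmorphM; apply: lowMl; apply: HS.
Qed.

Lemma pow_D c (I : R -> Prop) : (forall g, I g -> Dc c g) ->
  forall i g, ideal_pow I i g -> Dc (i * c) g.
Proof.
move=> HI; elim => [|i IH] g /=; first by rewrite mul0n => _; exact: low_any.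
apply: gen_D => s [a [b [Ha Hb ->]]].
rewrite /Dc rmorphM mulSn addnC.
by have [] := lowM (IH _ Ha) (HI _ Hb).
Qed.

Lemma closure_D c (I : R -> Prop) : (forall g, I g -> Dc c g) ->
  forall f, int_closure I f -> Dc c f.
Proof.
move=> HI f [m [a [m0 Ha Heq]]] j jc; apply/eqP; apply/negPn/negP => Hj.
have E : exists j, (j < c)%N && ((phi f)`_j != 0) by exists j; rewrite jc.
case: (ex_minnP E) => d /andP[dc Hd] Hmin.
have Hlow : low (phi f) d.
  move=> k kd; apply/eqP; apply/negPn/negP => Hk.
  by have := Hmin k; rewrite Hk (ltn_trans kd dc) => /(_ isT); rewrite leqNgt kd.
have [_ HX] := lowX m Hlow.
have : (phi (f ^+ m + \sum_(1 <= i < m.+1) a i * f ^+ (m - i)))`_(m * d) = 0.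
  by rewrite Heq rmorph0 coef0.
rewrite rmorphD coefD rmorphXn HX.
rewrite [X in _ + X = 0](_ : _ = 0) ?addr0.
  by move/eqP; rewrite expf_eq0 (negbTE Hd) andbF.
rewrite rmorph_sum coef_sum big1_seq //.
move=> i /andP[_]; rewrite mem_index_iota => /andP[i1 im].
rewrite rmorphM rmorphXn.
have Him : (0 < i <= m)%N by apply/andP; split.
have HA := pow_D HI (Ha i Him).
have [H1 _] := lowM HA (proj1 (lowX (m - i) Hlow)).
apply: H1.
have : (m * d = i * d + (m - i) * d)%N by rewrite -mulnDl subnKC.
move=> ->; rewrite ltn_add2r ltn_mul2l dc andbT; by case: i i1 {im Him HA}.
Qed.

Lemma mmap1_hh (m : 'X_{1..n}) : mmap1 hh m = ('X_[m])%:P * 'X^(wt m).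
Proof.
rewrite /mmap1 (eq_bigr (fun i => ('X_i ^+ m i)%:P * 'X ^+ (om i * m i))).
  rewrite big_split /= -rmorph_prod -mpolyXE_id prodrXr /wt /wdot. reflexivity.
by move=> i _; rewrite /hh exprMn rmorphXn -exprM.
Qed.

Lemma term_coef (c : K) (m : 'X_{1..n}) j :
  (ff c * mmap1 hh m)`_j = if j == wt m then c *: 'X_[m] else 0.
Proof.
rewrite mmap1_hh mulrA /ff /= -rmorphM coefMXn coefC mul_mpolyC.
case: (ltngtP j (wt m)) => H //.
- by rewrite subn_eq0 leqNgt H.
- by rewrite H subnn.
Qed.

Lemma mcoeff_sumE (I : Type) (r : seq I) (P : pred I) (F : I -> R) m :
  (\sum_(i <- r | P i) F i)@_m = \sum_(i <- r | P i) (F i)@_m.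
Proof. exact: raddf_sum. Qed.

Lemma D_supp c g : Dc c g -> forall m, g@_m != 0 -> (c <= wt m)%N.
Proof.
move=> H m0 Hm0; rewrite leqNgt; apply/negP => Hlt.
have := H _ Hlt; rewrite /phi /= /mmap coef_sum.
under eq_bigr => m _ do rewrite term_coef.
move=> /(congr1 (mcoeff m0)).
rewrite mcoeff_sumE (bigD1_seq m0) //= ?msupp_uniq ?mcoeff_msupp //.
rewrite eqxx mcoeffZ mcoeffX eqxx mulr1.
rewrite big1 ?addr0.
- move=> E; apply: (negP Hm0); apply/eqP; rewrite E; exact: mcoeff0.
- move=> m /negbTE mm0; case: ifP => _; last exact: mcoeff0.
  by rewrite mcoeffZ mcoeffX mm0 mulr0.
Qed.

Definition Dec (al : 'I_n -> nat) k := exists be : 'I_k -> 'I_n -> nat,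
  (forall j, Gamma lam (be j)) /\ (forall i, \sum_(j < k) be j i <= al i)%N.

Lemma append (P : ('I_n -> nat) -> Prop) k (be : 'I_k -> 'I_n -> nat) e :
  (forall j, P (be j)) -> P e ->
  exists be' : 'I_k.+1 -> 'I_n -> nat, (forall j, P (be' j)) /\
    forall i, (\sum_(j < k.+1) be' j i = \sum_(j < k) be j i + e i)%N.
Proof.
move=> Hb He.
exists (fun j => if unlift ord_max j is Some j' then be j' else e); split.
  by move=> j; case: unlift.
move=> i; rewrite big_ord_recr /= unlift_none; congr (_ + _)%N.
apply: eq_bigr => j _.
have -> : widen_ord (leqnSn k) j = lift ord_max j by apply: val_inj; rewrite /= /bump leqNgt ltn_ord.
by rewrite liftK.
Qed.

Lemma Gamma_mono a b : Gamma lam a -> (forall i, a i <= b i)%N -> Gamma lam b.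
Proof.
rewrite /Gamma /wdot => H Hab; apply: leq_trans H _; apply: leq_sum => i _.
by rewrite leq_mul2l Hab orbT.
Qed.

Lemma Dec0 al : Dec al 0.
Proof. by exists (fun _ _ => 0%N); split => [[]//|i]; rewrite big_ord0. Qed.

Lemma DecS al k g d : Dec al k -> Gamma lam g -> (forall i, al i + g i <= d i)%N ->
  Dec d k.+1.
Proof.
move=> [be [Hb Hs]] Hg Hd.
have [be' [Hb' Hs']] := append (P := Gamma lam) Hb Hg.
exists be'; split => // i; rewrite Hs'; apply: leq_trans (Hd i).
by rewrite leq_add2r; exact: Hs.
Qed.

Lemma Dec_decomp al k : Dec al k.+1 -> decomposable lam al k.+1.
Proof.
move=> [be [Hb Hs]].
pose e := fun i => (be ord_max i + (al i - \sum_(j < k.+1) be j i))%N.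
have He : Gamma lam e by apply: (Gamma_mono (Hb ord_max)) => i; exact: leq_addr.
have [be' [Hb' Hs']] := append (P := Gamma lam)
   (be := fun j : 'I_k => be (widen_ord (leqnSn k) j)) (fun j => Hb _) He.
exists be'; split => // i.
by rewrite Hs' /e addnA -(big_ord_recr k (fun j => be j i)) subnKC.
Qed.

Lemma wdot_lt al : (forall i, al i < lam i)%N -> (wdot lam al + n <= n * L)%N.
Proof.
move=> H; rewrite /wdot.
apply: (@leq_trans (\sum_(i < n) (om i * al i + 1))%N).
  by rewrite big_split /= sum1_card card_ord.
have -> : (n * L = \sum_(i < n) L)%N by rewrite sum_nat_const card_ord.
apply: leq_sum => i _; rewrite addn1 -(omK i) ltn_pmul2l ?om_gt0 //.
Qed.

Lemma wdot_split al i : (lam i <= al i)%N ->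
  wdot lam al = (wdot lam (fun j => if j == i then al j - lam i else al j) + L)%N.
Proof.
move=> Hi; rewrite /wdot (bigD1 i) //= [in RHS](bigD1 i) //= eqxx.
rewrite [X in _ = (_ + X + _)%N](eq_bigr (fun j => om j * al j)%N); last first.
  by move=> j /negbTE ->.
have : (L <= om i * al i)%N by rewrite -(omK i) leq_mul2l Hi orbT.
rewrite mulnBr omK; lia.
Qed.

Lemma Gamma_e i : Gamma lam (fun j => if j == i then lam i else 0%N).
Proof.
rewrite /Gamma /wdot (bigD1 i) //= eqxx omK big1 ?addn0 // => j /negbTE ->.
by rewrite muln0.
Qed.

Lemma c_to_b :
  (forall (alpha : 'I_n -> nat) (p : nat),
      (forall i, alpha i < lam i)%N -> (1 <= p < n)%N ->
      (p * L <= wdot lam alpha)%N -> decomposable lam alpha p) ->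
  forall (alpha : 'I_n -> nat) (p : nat),
      (0 < p)%N -> (p * L <= wdot lam alpha)%N -> decomposable lam alpha p.
Proof.
move=> Hc al p; elim: p al => [//|[|q] IH] al _ Hal.
  exists (fun _ => al); split => [_|i]; last by rewrite big_ord1.
  by rewrite /Gamma -(mul1n L).
case: (boolP [exists i, (lam i <= al i)%N]) => [/existsP [i Hi]|/existsPn Hn].
  pose al' := fun j => if j == i then (al j - lam i)%N else al j.
  have Hal' : (q.+1 * L <= wdot lam al')%N.
    by move: Hal; rewrite (wdot_split Hi) -/al' (mulSn q.+1) addnC leq_add2r.
  have [be [Hb Hs]] := IH al' isT Hal'.
  have [be' [Hb' Hs']] := append (P := Gamma lam) Hb (Gamma_e i).
  exists be'; split => // j; rewrite Hs' -Hs /al'.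
  by case: eqP => [->|_]; rewrite ?addn0 // subnK.
have Hlt : forall i, (al i < lam i)%N by move=> i; move: (Hn i); rewrite ltnNge.
case: (ltnP q.+2 n) => Hqn; first by apply: Hc.
have H0 := wdot_lt Hlt.
have H1 : (n * L <= q.+2 * L)%N by rewrite leq_mul2r Hqn orbT.
have H2 : (0 < q.+2 * L)%N by rewrite muln_gt0 L_gt0.
have H3 : n = 0%N -> (n * L = 0)%N.
  by move=> E; apply/eqP; rewrite muln_eq0; apply/orP; left; apply/eqP.
exfalso; move: Hal H0 H1 H2 H3; generalize (q.+2 * L)%N (n * L)%N (wdot lam al); lia.
Qed.


Definition mono (al : 'I_n -> nat) : R := \prod_(i < n) 'X_i ^+ al i.
Definition gens al : seq R :=
  flatten [seq nseq (om i * al i)%N ('X_i ^+ lam i) | i <- index_enum 'I_n].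

Lemma prod_nseq k (x : R) : \prod_(y <- nseq k x) y = x ^+ k.
Proof. by elim: k => [|k IH]; rewrite ?big_nil ?expr0 // /= big_cons IH exprS. Qed.

Lemma mono_pow al : mono al ^+ L = \prod_(x <- gens al) x.
Proof.
rewrite /gens big_flatten /= big_map /mono -prodrXl.
apply: eq_bigr => i _; rewrite prod_nseq -!exprM; congr (_ ^+ _).
by rewrite mulnA [(lam i * om i)%N]mulnC omK mulnC.
Qed.

Lemma size_gens al : size (gens al) = wdot lam al.
Proof.
rewrite /gens size_flatten /shape -map_comp sumnE big_map /wdot.
by apply: eq_bigr => i _ /=; rewrite size_nseq.
Qed.

Lemma gens_in al x : x \in gens al -> exists i, x = 'X_i ^+ lam i.
Proof. by move=> /flatten_mapP [i _ /nseqP [-> _]]; exists i. Qed.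

Lemma Jgen i : @Jlam K n lam ('X_i ^+ lam i).
Proof. rewrite /Jlam -[_ ^+ _]mul1r; apply: gen1; by exists i. Qed.

Lemma Igen i : @Ilam K n lam ('X_i ^+ lam i).
Proof.
apply: (@integral_of_pow _ _ _ 1%N) => //.
have := @pow_seq _ (@Jlam K n lam) 1 [:: 'X_i ^+ lam i] (-1).
rewrite big_seq1 expr1; apply => //.
by move=> x; rewrite inE => /eqP ->; exact: Jgen.
Qed.

Lemma Ilam_mono be : Gamma lam be -> @Ilam K n lam (mono be).
Proof.
move=> Hb; apply: (@integral_of_pow _ _ _ L L_gt0); rewrite mono_pow.
by apply: pow_seq => [x /gens_in [i ->]|]; [exact: Jgen | rewrite size_gens].
Qed.

Lemma mono_closure al p : (p * L <= wdot lam al)%N ->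
  int_closure (ideal_pow (@Ilam K n lam) p) (mono al).
Proof.
move=> Hb; apply: (@integral_of_pow _ _ _ L L_gt0); rewrite mono_pow.
by apply: pow_seq2 => [x /gens_in [i ->]|]; [exact: Igen | rewrite size_gens].
Qed.

Lemma Ilam_D g : @Ilam K n lam g -> Dc L g.
Proof. apply: closure_D => h; apply: gen_D => s [i ->]; exact: Dc_gen. Qed.

Lemma powP k g : ideal_pow (@Ilam K n lam) k g ->
  forall m, g@_m != 0 -> Dec (fun i => m i) k.
Proof.
elim: k g => [|k IH] g /=; first by move=> _ m _; exact: Dec0.
move=> [M [cc [s [Hs ->]]]] m; rewrite mcoeff_sumE => Hm.
case: (pickP (fun j => (cc j * s j)@_m != 0)) => [j Hj|H0]; last first.
  move: Hm; rewrite big1 ?eqxx // => j _.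
  by move/negbT: (H0 j); rewrite negbK => /eqP.
have [a [b [Ha Hb Es]]] := Hs j.
move: Hj; rewrite Es -mcoeff_msupp => /msuppM_le /allpairsP [[m1 m2] [_ /= Hm2 ->]].
move: Hm2 => /msuppM_le /allpairsP [[m3 m4] [/= Hm3 Hm4 ->]].
apply: (DecS (al := fun i => m3 i) (g := fun i => m4 i)).
- by apply: IH Ha _ _; rewrite -mcoeff_msupp.
- by have := D_supp (Ilam_D Hb) (m := m4); rewrite -mcoeff_msupp => /(_ Hm4).
- by move=> i; rewrite !mnmDE leq_addl.
Qed.

Lemma a_to_b : normal_ideal (@Ilam K n lam) ->
  forall (alpha : 'I_n -> nat) (p : nat),
      (0 < p)%N -> (p * L <= wdot lam alpha)%N -> decomposable lam alpha p.
Proof.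
move=> Hn al [//|p] _ Hal.
have Hp := Hn p.+1 isT _ (mono_closure Hal).
pose m := [multinom al i | i < n].
have Em : mono al = 'X_[m].
  by rewrite /mono mpolyXE_id; apply: eq_bigr => i _; rewrite mnmE.
move: Hp; rewrite Em => /powP /(_ m); rewrite mcoeffX eqxx oner_neq0 => /(_ isT) HD.
apply: Dec_decomp; move: HD => [be [Hb Hs]]; exists be; split => // i.
by have := Hs i; rewrite mnmE.
Qed.

Lemma b_to_a :
  (forall (alpha : 'I_n -> nat) (p : nat),
      (0 < p)%N -> (p * L <= wdot lam alpha)%N -> decomposable lam alpha p) ->
  normal_ideal (@Ilam K n lam).
Proof.
move=> Hb [//|k] _ f Hf.
have HD : Dc (k.+1 * L) f.
  by apply: (closure_D _ Hf) => g Hg; apply: (pow_D Ilam_D Hg).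
have Hgen : forall m, m \in msupp f ->
    exists a b, [/\ ideal_pow (@Ilam K n lam) k a, @Ilam K n lam b & 'X_[m] = a * b].
  move=> m; rewrite mcoeff_msupp => Hm.
  have Hw := D_supp HD Hm.
  have [be [Hbe Hs]] := Hb (fun i => m i) k.+1 isT Hw.
  have -> : 'X_[m] = \prod_(x <- [seq mono (be j) | j <- index_enum 'I_k.+1]) x.
    rewrite big_map mpolyXE_id /mono exchange_big /=; apply: eq_bigr => i _.
    by rewrite Hs -prodrXr.
  apply: pow_seq_gen => [x /mapP [j _ ->]|]; first exact: Ilam_mono.
  by rewrite size_map -sum1_size sum1_card card_ord.
rewrite {1}(mpolyE f) (big_nth 0%MM) big_mkord /=.
exists (size (msupp f)), (fun j => (f@_(nth 0%MM (msupp f) j))%:MP),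
  (fun j => 'X_[nth 0%MM (msupp f) j]); split.
  by move=> j; apply: Hgen; apply: mem_nth; exact: ltn_ord.
by apply: eq_bigr => j _; rewrite mul_mpolyC.
Qed.

End Main.

Local Close Scope ring_scope.
Unset Implicit Arguments.
Set Strict Implicit.

Theorem lemma4p3 (K : fieldType) (n : nat) (lam : 'I_n -> nat)
    (lam_pos : forall i, (0 < lam i)%N) :
  let a := normal_ideal (@Ilam K n lam) in
  let b := forall (alpha : 'I_n -> nat) (p : nat),
      (0 < p)%N -> (p * lcm_lam lam <= wdot lam alpha)%N -> decomposable lam alpha p in
  let c := forall (alpha : 'I_n -> nat) (p : nat),
      (forall i, alpha i < lam i)%N -> (1 <= p < n)%N ->
      (p * lcm_lam lam <= wdot lam alpha)%N -> decomposable lam alpha p in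
  (a <-> b) /\ (b <-> c).
Proof.
move=> a b c; rewrite /a /b /c; split; split.
- exact: a_to_b.
- exact: b_to_a.
- move=> Hb al p Hal Hp HL; apply: Hb => //; by case/andP: Hp.
- exact: c_to_b.
Qed.
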